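(* Suppose $\{\mathcal{G}_k\}$ is uniformly jointly strongly connected with constant $B\ge1$, and consider an algorithm in $\mathcal{A}_{\rm ave}$. (i) If $\alpha_k\ge\alpha_{k+1}$ for all $k$ and $\sum_{k=0}^\infty\alpha_k^{(n-1)B}=\infty$, then global asymptotic consensus is achieved. (ii) If $\alpha_k+\eta_k\le\alpha_{k+1}+\eta_{k+1}$ for all $k$ and $\sum_{k=0}^\infty(1-\alpha_k-\eta_k)^{(n-1)B}=\infty$, then global asymptotic consensus is achieved.
   Context: Network of nodes $\mathcal{V}=\{1,\dots,n\}$, $n\ge 3$, discrete time, states $x_i(k)\in\mathbb{R}$. At each time $k$ a digraph $\mathcal{G}_k=(\mathcal{V},\mathcal{E}_k)$ is given; $j$ is a neighbor of $i$ at time $k$ if $(j,i)\in\mathcal{E}_k$, every node is always its own neighbor; $\mathcal{N}_i(k)$ is the neighbor set. The algorithm is $$x_i(k+1)=\eta_k x_i(k)+\alpha_k\min_{j\in\mathcal{N}_i(k)}x_j(k)+(1-\eta_k-\alpha_k)\max_{j\in\mathcal{N}_i(k)}x_j(k),$$ with node-independent parameters; $\mathcal{A}_{\rm ave}$ consists of those with $\eta_k\in(0,1]$, $\alpha_k\in[0,1-\eta_k]$ for all $k$. Global asymptotic consensus: for every initial time $k_0\ge0$ and initial value $x(k_0)=x^0\in\mathbb{R}^n$ there is $z_*$ with $x_i(k)\to z_*$ for all $i$. A digraph is strongly connected if every node is reachable from every other node by a directed path. $\mathcal{G}([k_1,k_2])=(\mathcal{V},\cup_{k\in[k_1,k_2]}\mathcal{E}_k)$.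 $\{\mathcal{G}_k\}$ is uniformly jointly strongly connected if there is an integer $B\ge1$ with $\mathcal{G}([k,k+B-1])$ strongly connected for all $k\ge0$. *)

(* Defs.v *)
From Stdlib Require Import Reals Lra Lia List Relations.
Import ListNotations.
Open Scope R_scope.

(* Nodes are 0, ..., n-1.  A time-varying digraph is a boolean edge relation
   E k j i meaning (j,i) is an edge of G_k (j is a neighbor of i at time k).
   Every node is always its own neighbor: the neighbor set of i at time k is
   {i} ∪ { j < n | E k j i }. *)
Definition graph_seq := nat -> nat -> nat -> bool.

Definition neighbors (n : nat) (E : graph_seq) (k i : nat) : list nat :=
  filter (fun j => E k j i) (seq 0 n).

Definition nbr_min (n : nat) (E : graph_seq) (k i : nat) (x : nat -> R) : R :=
  fold_right Rmin (x i) (map x (neighbors n E k i)).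
Definition nbr_max (n : nat) (E : graph_seq) (k i : nat) (x : nat -> R) : R :=
  fold_right Rmax (x i) (map x (neighbors n E k i)).

Definition step (n : nat) (E : graph_seq) (eta alpha : nat -> R) (k : nat)
  (x : nat -> R) : nat -> R :=
  fun i => eta k * x i + alpha k * nbr_min n E k i x
           + (1 - eta k - alpha k) * nbr_max n E k i x.

(* traj ... k0 x0 m = x(k0 + m) for the trajectory with x(k0) = x0. *)
Fixpoint traj (n : nat) (E : graph_seq) (eta alpha : nat -> R) (k0 : nat)
  (x0 : nat -> R) (m : nat) : nat -> R :=
  match m with
  | O => x0
  | S m' => step n E eta alpha (k0 + m') (traj n E eta alpha k0 x0 m')
  end.

Definition global_consensus (n : nat) (E : graph_seq) (eta alpha : nat -> R) : Prop :=
  forall (k0 : nat) (x0 : nat -> R), exists zstar : R,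
    forall i, (i < n)%nat -> Un_cv (fun m => traj n E eta alpha k0 x0 m i) zstar.

Definition in_A_ave (eta alpha : nat -> R) : Prop :=
  forall k, 0 < eta k <= 1 /\ 0 <= alpha k <= 1 - eta k.

Definition union_edge (n : nat) (E : graph_seq) (k1 k2 : nat) (j i : nat) : Prop :=
  (j < n)%nat /\ (i < n)%nat /\ exists k, (k1 <= k <= k2)%nat /\ E k j i = true.

Definition strongly_connected_union (n : nat) (E : graph_seq) (k1 k2 : nat) : Prop :=
  forall i j, (i < n)%nat -> (j < n)%nat ->
    clos_refl_trans nat (union_edge n E k1 k2) i j.

Definition UJSC (n : nat) (E : graph_seq) (B : nat) : Prop :=
  (1 <= B)%nat /\ forall k, strongly_connected_union n E k (k + B - 1).

(* Main.v *)
Require Import Defs.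
From Stdlib Require Import Reals Lra Lia List Relations Classical Bool FunctionalExtensionality.
Import ListNotations.
Open Scope R_scope.

Lemma fmin_le_d d (x : nat -> R) l : fold_right Rmin d (map x l) <= d.
Proof. induction l; simpl; [lra|]. eapply Rle_trans; [apply Rmin_r|auto]. Qed.
Lemma fmin_le_in d (x : nat -> R) l j : In j l -> fold_right Rmin d (map x l) <= x j.
Proof. induction l; simpl; [tauto|]. intros [->|H]; [apply Rmin_l|].
  eapply Rle_trans; [apply Rmin_r|auto]. Qed.
Lemma fmin_ge d (x : nat -> R) l a : a <= d -> (forall j, In j l -> a <= x j) ->
  a <= fold_right Rmin d (map x l).
Proof. intros Hd H; induction l; simpl; auto. apply Rmin_glb; auto with datatypes. Qed.
Lemma fmax_ge_d d (x : nat -> R) l : d <= fold_right Rmax d (map x l).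
Proof. induction l; simpl; [lra|]. eapply Rle_trans; [apply IHl|apply Rmax_r]. Qed.
Lemma fmax_le d (x : nat -> R) l b : d <= b -> (forall j, In j l -> x j <= b) ->
  fold_right Rmax d (map x l) <= b.
Proof. intros Hd H; induction l; simpl; auto. apply Rmax_lub; auto with datatypes. Qed.
Lemma fmax_ge_in d (x : nat -> R) l j : In j l -> x j <= fold_right Rmax d (map x l).
Proof. induction l; simpl; [tauto|]. intros [->|H]; [apply Rmax_l|].
  eapply Rle_trans; [apply IHl; auto|apply Rmax_r]. Qed.
Lemma fmin_attain d (x : nat -> R) l : fold_right Rmin d (map x l) = d \/
  exists j, In j l /\ fold_right Rmin d (map x l) = x j.
Proof. induction l; simpl; [auto|].
  destruct IHl as [H|[j [Hj H]]]; rewrite H; unfold Rmin; destruct (Rle_dec _ _).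
  - right; exists a; auto.
  - left; auto.
  - right; exists a; auto.
  - right; exists j; auto. Qed.

Lemma in_nbr n E k i j : In j (neighbors n E k i) <-> (j < n)%nat /\ E k j i = true.
Proof. unfold neighbors. rewrite filter_In, in_seq. split; intros [H1 H2]; split; auto; lia. Qed.

Lemma step_le n E eta alpha k x b i : 0 < eta k <= 1 /\ 0 <= alpha k <= 1 - eta k ->
  (forall j, (j < n)%nat -> x j <= b) -> (i < n)%nat -> step n E eta alpha k x i <= b.
Proof. intros [H1 H2] Hx Hi. unfold step.
  assert (A1 : nbr_min n E k i x <= b) by (eapply Rle_trans; [apply fmin_le_d|auto]).
  assert (A2 : nbr_max n E k i x <= b).
  { apply fmax_le; auto. intros j Hj; apply in_nbr in Hj; apply Hx; tauto. }
  specialize (Hx i Hi). nra. Qed.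

Lemma step_ge n E eta alpha k x a i : 0 < eta k <= 1 /\ 0 <= alpha k <= 1 - eta k ->
  (forall j, (j < n)%nat -> a <= x j) -> (i < n)%nat -> a <= step n E eta alpha k x i.
Proof. intros [H1 H2] Hx Hi. unfold step.
  assert (A1 : a <= nbr_max n E k i x) by (eapply Rle_trans; [|apply fmax_ge_d]; auto).
  assert (A2 : a <= nbr_min n E k i x).
  { apply fmin_ge; auto. intros j Hj; apply in_nbr in Hj; apply Hx; tauto. }
  specialize (Hx i Hi). nra. Qed.

Lemma step_gap n E eta alpha k x b i j : 0 < eta k <= 1 /\ 0 <= alpha k <= 1 - eta k ->
  (forall j, (j < n)%nat -> x j <= b) -> (i < n)%nat ->
  (j = i \/ ((j < n)%nat /\ E k j i = true)) ->
  alpha k * (b - x j) <= b - step n E eta alpha k x i.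
Proof. intros [H1 H2] Hx Hi Hj. unfold step.
  assert (A1 : nbr_min n E k i x <= x j).
  { destruct Hj as [->|Hj]; [apply fmin_le_d|apply fmin_le_in, in_nbr; auto]. }
  assert (A2 : nbr_max n E k i x <= b).
  { apply fmax_le; auto. intros j' Hj'; apply in_nbr in Hj'; apply Hx; tauto. }
  assert (A3 : nbr_min n E k i x <= x i) by apply fmin_le_d.
  specialize (Hx i Hi). nra. Qed.

Lemma traj_le n E eta alpha k1 x b : in_A_ave eta alpha ->
  (forall j, (j < n)%nat -> x j <= b) ->
  forall t j, (j < n)%nat -> traj n E eta alpha k1 x t j <= b.
Proof. intros hA Hx t; induction t; simpl; auto. intros; apply step_le; auto. Qed.
Lemma traj_ge n E eta alpha k1 x a : in_A_ave eta alpha ->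
  (forall j, (j < n)%nat -> a <= x j) ->
  forall t j, (j < n)%nat -> a <= traj n E eta alpha k1 x t j.
Proof. intros hA Hx t; induction t; simpl; auto. intros; apply step_ge; auto. Qed.

Lemma traj_comp n E eta alpha k0 x0 t m :
  traj n E eta alpha k0 x0 (t + m) = traj n E eta alpha (k0 + t) (traj n E eta alpha k0 x0 t) m.
Proof. induction m; simpl. now rewrite Nat.add_0_r.
  rewrite Nat.add_succ_r; simpl; rewrite IHm. now replace (k0 + (t + m))%nat with (k0 + t + m)%nat by lia. Qed.

Fixpoint reachb (n : nat) (E : graph_seq) (k1 j0 t : nat) : nat -> bool :=
  match t with
  | O => fun i => Nat.eqb i j0
  | S t' => fun i => reachb n E k1 j0 t' i ||
      (Nat.ltb i n && existsb (fun j => reachb n E k1 j0 t' j && E (k1 + t')%nat j i) (seq 0 n))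
  end.

Fixpoint aprod (alpha : nat -> R) (k1 t : nat) : R :=
  match t with O => 1 | S t' => aprod alpha k1 t' * alpha (k1 + t')%nat end.

Lemma reach_lt n E k1 j0 t i : (j0 < n)%nat -> reachb n E k1 j0 t i = true -> (i < n)%nat.
Proof. intros Hj; revert i; induction t; simpl; intros i H.
  - apply Nat.eqb_eq in H; subst; auto.
  - apply orb_true_iff in H as [H|H]; auto. apply andb_true_iff in H as [H _].
    apply Nat.ltb_lt; auto. Qed.

Lemma reach_mono n E k1 j0 t s i : reachb n E k1 j0 t i = true -> reachb n E k1 j0 (t + s) i = true.
Proof. intros H; induction s. now rewrite Nat.add_0_r.
  rewrite Nat.add_succ_r; simpl; rewrite IHs; auto. Qed.

Lemma reach_mono' n E k1 j0 t t' i : (t <= t')%nat -> reachb n E k1 j0 t i = true -> reachb n E k1 j0 t' i = true.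
Proof. intros Hl H. replace t' with (t + (t' - t))%nat by lia. apply reach_mono; auto. Qed.

Lemma reach_edge n E k1 j0 t i j : reachb n E k1 j0 t j = true -> (j < n)%nat -> (i < n)%nat ->
  E (k1 + t)%nat j i = true -> reachb n E k1 j0 (S t) i = true.
Proof. intros H1 H2 H3 H4; simpl. apply orb_true_iff; right. apply andb_true_iff; split.
  apply Nat.ltb_lt; auto. apply existsb_exists. exists j; split.
  apply in_seq; lia. rewrite H1, H4; auto. Qed.

Lemma aprod_nonneg alpha k1 t : (forall k, 0 <= alpha k) -> 0 <= aprod alpha k1 t.
Proof. intros H; induction t; simpl; [lra|]. apply Rmult_le_pos; auto. Qed.

Lemma gap n E eta alpha k1 x b j0 : in_A_ave eta alpha -> (j0 < n)%nat ->
  (forall j, (j < n)%nat -> x j <= b) ->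
  forall t i, reachb n E k1 j0 t i = true ->
    aprod alpha k1 t * (b - x j0) <= b - traj n E eta alpha k1 x t i.
Proof. intros hA Hj0 Hx t; induction t; intros i H.
  - simpl in *. apply Nat.eqb_eq in H; subst; lra.
  - assert (Hi : (i < n)%nat) by (eapply reach_lt; eauto).
    assert (Ha : 0 <= alpha (k1 + t)%nat) by (apply hA).
    assert (Hle := traj_le n E eta alpha k1 x b hA Hx t).
    simpl in H. apply orb_true_iff in H as [H|H].
    + pose proof (step_gap n E eta alpha (k1 + t) (traj n E eta alpha k1 x t) b i i (hA _) Hle Hi (or_introl eq_refl)).
      simpl. specialize (IHt i H). nra.
    + apply andb_true_iff in H as [_ H]. apply existsb_exists in H as [j [Hjs Hj]].
      apply andb_true_iff in Hj as [Hj1 Hj2]. apply in_seq in Hjs.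
      pose proof (step_gap n E eta alpha (k1 + t) (traj n E eta alpha k1 x t) b i j (hA _) Hle Hi
        (or_intror (conj (proj2 Hjs) Hj2))).
      simpl. specialize (IHt j Hj1). nra.
Qed.

Lemma filter_len_le {A} (f : A -> bool) l : (length (filter f l) <= length l)%nat.
Proof. induction l; simpl; auto. destruct (f a); simpl; lia. Qed.

Lemma filter_len_mono {A} (f g : A -> bool) l : (forall x, In x l -> f x = true -> g x = true) ->
  (length (filter f l) <= length (filter g l))%nat.
Proof. induction l; simpl; intros H; auto.
  assert (IH := IHl (fun x Hx => H x (or_intror Hx))).
  destruct (f a) eqn:Ef. rewrite (H a (or_introl eq_refl) Ef); simpl; lia.
  destruct (g a); simpl; lia. Qed.

Lemma filter_len_strict {A} (f g : A -> bool) l v : (forall x, In x l -> f x = true -> g x = true) ->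
  In v l -> f v = false -> g v = true -> (length (filter f l) < length (filter g l))%nat.
Proof. induction l; simpl; intros H Hv Hf Hg; [tauto|].
  assert (M := filter_len_mono f g l (fun x Hx => H x (or_intror Hx))).
  destruct Hv as [->|Hv].
  - rewrite Hf, Hg; simpl; lia.
  - assert (IH := IHl (fun x Hx => H x (or_intror Hx)) Hv Hf Hg).
    destruct (f a) eqn:Ef. rewrite (H a (or_introl eq_refl) Ef); simpl; lia.
    destruct (g a); simpl; lia. Qed.

Lemma filter_len_full {A} (f : A -> bool) l : (length l <= length (filter f l))%nat ->
  forall x, In x l -> f x = true.
Proof. induction l; simpl; intros H x Hx; [tauto|].
  destruct (f a) eqn:Ef; simpl in H.
  - destruct Hx as [->|Hx]; auto. apply IHl; auto; lia.
  - pose proof (filter_len_le f l); lia. Qed.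

Lemma crt_cross (Rl : nat -> nat -> Prop) (P : nat -> bool) x y :
  clos_refl_trans nat Rl x y -> P x = true -> P y = false ->
  exists u v, Rl u v /\ P u = true /\ P v = false.
Proof. induction 1; intros Hx Hy.
  - eauto.
  - congruence.
  - destruct (P y) eqn:Ey; auto. Qed.

Definition cnt n E k1 j0 t := length (filter (reachb n E k1 j0 t) (seq 0 n)).

Lemma growth n E B k1 j0 t : UJSC n E B -> (j0 < n)%nat ->
  (exists i, (i < n)%nat /\ reachb n E k1 j0 t i = false) ->
  (cnt n E k1 j0 t < cnt n E k1 j0 (t + B))%nat.
Proof. intros [HB HSC] Hj0 [i [Hi Hr]].
  assert (R0 : reachb n E k1 j0 t j0 = true).
  { apply (reach_mono' n E k1 j0 0); [lia|]. simpl; apply Nat.eqb_refl. }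
  destruct (crt_cross _ _ _ _ (HSC (k1 + t)%nat j0 i Hj0 Hi) R0 Hr) as [u [v [Huv [Hu Hv]]]].
  destruct Huv as [Hun [Hvn [k [Hk HE]]]].
  assert (Hs : reachb n E k1 j0 (k - k1) u = true) by (apply (reach_mono' _ _ _ _ t); auto; lia).
  assert (Hs2 : reachb n E k1 j0 (S (k - k1)) v = true).
  { eapply reach_edge; eauto. now replace (k1 + (k - k1))%nat with k by lia. }
  apply (filter_len_strict _ _ _ v).
  - intros x _ Hx. eapply reach_mono'; [|exact Hx]; lia.
  - apply in_seq; lia.
  - auto.
  - eapply reach_mono'; [|exact Hs2]; lia.
Qed.

Lemma all_reached n E B k1 j0 : UJSC n E B -> (j0 < n)%nat ->
  forall i, (i < n)%nat -> reachb n E k1 j0 ((n - 1) * B) i = true.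
Proof. intros HU Hj0.
  assert (H : forall m, (forall i, (i < n)%nat -> reachb n E k1 j0 (m * B) i = true) \/
     (m + 1 <= cnt n E k1 j0 (m * B))%nat).
  { induction m.
    - right. unfold cnt. simpl.
      assert (In j0 (filter (reachb n E k1 j0 0) (seq 0 n))).
      { apply filter_In; split; [apply in_seq; lia| simpl; apply Nat.eqb_refl]. }
      destruct (filter _ _); simpl in *; [tauto|lia].
    - destruct (classic (forall i, (i < n)%nat -> reachb n E k1 j0 (m * B) i = true)) as [Ha|Ha].
      + left. intros i Hi. eapply reach_mono'; [|apply Ha; auto]. simpl; lia.
      + right. destruct IHm as [IH|IH]; [tauto|].
        assert (Ex : exists i, (i < n)%nat /\ reachb n E k1 j0 (m * B) i = false).
        { apply NNPP; intro C; apply Ha; intros i Hi.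
          destruct (reachb n E k1 j0 (m * B) i) eqn:Er; auto. exfalso; apply C; eauto. }
        pose proof (growth n E B k1 j0 (m * B) HU Hj0 Ex).
        replace (S m * B)%nat with (m * B + B)%nat by (simpl; lia). lia. }
  destruct (H (n - 1)%nat) as [Ha|Hc]; auto.
  intros i Hi. apply (filter_len_full _ (seq 0 n)).
  - rewrite length_seq. unfold cnt in Hc. lia.
  - apply in_seq; lia.
Qed.

Lemma window n E B eta alpha k1 x a b j0 : UJSC n E B -> in_A_ave eta alpha -> (j0 < n)%nat ->
  (forall j, (j < n)%nat -> a <= x j <= b) -> x j0 = a ->
  forall i, (i < n)%nat -> a <= traj n E eta alpha k1 x ((n - 1) * B) i /\
    traj n E eta alpha k1 x ((n - 1) * B) i <= b - aprod alpha k1 ((n - 1) * B) * (b - a).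
Proof. intros HU hA Hj0 Hx Ha i Hi. split.
  - apply traj_ge; auto. intros; apply Hx; auto.
  - pose proof (gap n E eta alpha k1 x b j0 hA Hj0 (fun j Hj => proj2 (Hx j Hj)) _ i
      (all_reached n E B k1 j0 HU Hj0 i Hi)). rewrite Ha in H. lra.
Qed.

Fixpoint msum (g : nat -> R) (T : nat) : R :=
  match T with O => 0 | S T' => msum g T' + g T' end.
Fixpoint wsum (d : nat -> R) (T L : nat) : R :=
  match L with O => 0 | S l => wsum d T l + d (T + l)%nat end.

Lemma wsum_S d T L : wsum d (S T) L = wsum d T L + d (T + L)%nat - d T.
Proof. induction L; simpl. rewrite Nat.add_0_r; ring.
  rewrite IHL. replace (S (T + L)) with (T + S L)%nat by lia. ring. Qed.

Lemma wsum_nonneg d T L : (forall t, 0 <= d t) -> 0 <= wsum d T L.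
Proof. intros H; induction L; simpl; [lra|]. specialize (H (T + L)%nat); lra. Qed.

Lemma sum_split f K T : sum_f_R0 f (K + T) = sum_f_R0 f K + msum (fun s => f (K + 1 + s)%nat) T.
Proof. induction T; simpl. rewrite Nat.add_0_r; ring.
  rewrite Nat.add_succ_r; simpl. rewrite IHT. replace (S (K + T)) with (K + 1 + T)%nat by lia. ring. Qed.

Lemma decr_multi (d : nat -> R) : (forall t, d (S t) <= d t) -> forall t s, (t <= s)%nat -> d s <= d t.
Proof. intros H t s Hs. induction Hs; [lra|]. specialize (H m); lra. Qed.

Lemma decay (d a : nat -> R) L : (forall t, 0 <= d t) -> (forall t, d (S t) <= d t) ->
  (forall t, 0 <= a t) -> (forall t, d (t + L)%nat <= (1 - a t) * d t) ->
  (forall M, exists T, M < msum a T) -> forall eps, 0 < eps -> exists T, forall t, (T <= t)%nat -> d t < eps.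
Proof. intros Hd Hdec Ha Hstep Hinf eps Heps.
  destruct (classic (exists T, d T < eps)) as [[T HT]|HN].
  - exists T; intros t Ht. pose proof (decr_multi d Hdec T t Ht); lra.
  - assert (Hge : forall t, eps <= d t).
    { intro t; destruct (Rlt_le_dec (d t) eps); auto. exfalso; eauto. }
    assert (HW : forall T, wsum d T L <= wsum d 0 L - eps * msum a T).
    { induction T; simpl; [lra|]. rewrite wsum_S.
      specialize (Hstep T). specialize (Hge T). specialize (Ha T). nra. }
    destruct (Hinf (wsum d 0 L / eps)) as [T HT].
    specialize (HW T). pose proof (wsum_nonneg d T L Hd).
    assert (eps * msum a T <= wsum d 0 L) by lra.
    apply Rmult_lt_compat_l with (r := eps) in HT; auto.
    replace (eps * (wsum d 0 L / eps)) with (wsum d 0 L) in HT by (field; lra). lra.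
Qed.

Lemma msum_mono (a b : nat -> R) T : (forall t, a t <= b t) -> msum a T <= msum b T.
Proof. intros H; induction T; simpl; [lra|]. specialize (H T); lra. Qed.

Lemma aprod_lb alpha k1 L : (forall k, 0 <= alpha k) -> (forall k, alpha k >= alpha (S k)) ->
  alpha (k1 + L)%nat ^ L <= aprod alpha k1 L.
Proof. intros H0 Hm.
  assert (Hmon : forall p q, (p <= q)%nat -> alpha q <= alpha p).
  { intros p q Hpq; induction Hpq; [lra|]. specialize (Hm m); lra. }
  assert (forall t, (t <= L)%nat -> alpha (k1 + L)%nat ^ t <= aprod alpha k1 t).
  { induction t; simpl; intros Ht; [lra|].
    rewrite Rmult_comm. apply Rmult_le_compat; [apply pow_le; auto| auto | apply IHt; lia | apply Hmon; lia]. }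
  auto. Qed.

Lemma part1 n E B eta alpha : (1 <= n)%nat -> UJSC n E B -> in_A_ave eta alpha ->
  (forall k, alpha k >= alpha (S k)) ->
  cv_infty (fun N => sum_f_R0 (fun k => alpha k ^ ((n - 1) * B)) N) ->
  global_consensus n E eta alpha.
Proof.
  intros Hn HU hA Hm Hcv k0 x0.
  set (L := ((n - 1) * B)%nat) in *.
  set (y := fun t => traj n E eta alpha k0 x0 t).
  set (U := fun t => fold_right Rmax (y t 0%nat) (map (y t) (seq 0 n))).
  set (Lo := fun t => fold_right Rmin (y t 0%nat) (map (y t) (seq 0 n))).
  assert (H0 : forall k, 0 <= alpha k) by (intro k; apply hA).
  assert (HUb : forall t i, (i < n)%nat -> y t i <= U t).
  { intros t i Hi; apply fmax_ge_in, in_seq; lia. }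
  assert (HLb : forall t i, (i < n)%nat -> Lo t <= y t i).
  { intros t i Hi; apply fmin_le_in, in_seq; lia. }
  assert (HUle : forall t c, (forall i, (i < n)%nat -> y t i <= c) -> U t <= c).
  { intros t c H; apply fmax_le; [apply H; lia|]. intros j Hj; apply in_seq in Hj; apply H; lia. }
  assert (HLge : forall t c, (forall i, (i < n)%nat -> c <= y t i) -> c <= Lo t).
  { intros t c H; apply fmin_ge; [apply H; lia|]. intros j Hj; apply in_seq in Hj; apply H; lia. }
  assert (HLatt : forall t, exists j0, (j0 < n)%nat /\ y t j0 = Lo t).
  { intro t. destruct (fmin_attain (y t 0%nat) (y t) (seq 0 n)) as [H|[j [Hj H]]].
    - exists 0%nat; split; [lia|]. unfold Lo; rewrite H; auto.
    - exists j; split; [apply in_seq in Hj; lia|]. unfold Lo; rewrite H; auto. }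
  assert (Hbnd : forall t i, (i < n)%nat -> Lo t <= y (S t) i <= U t).
  { intros t i Hi. unfold y; simpl; fold (y t). split.
    - apply step_ge; auto.
    - apply step_le; auto. }
  assert (HUdec : forall t, U (S t) <= U t).
  { intro t; apply HUle; intros i Hi; apply Hbnd; auto. }
  assert (HLinc : forall t, Lo t <= Lo (S t)).
  { intro t; apply HLge; intros i Hi; apply Hbnd; auto. }
  set (d := fun t => U t - Lo t).
  assert (Hd0 : forall t, 0 <= d t).
  { intro t; unfold d. pose proof (HUb t 0%nat ltac:(lia)); pose proof (HLb t 0%nat ltac:(lia)); lra. }
  assert (Hddec : forall t, d (S t) <= d t).
  { intro t; unfold d; specialize (HUdec t); specialize (HLinc t); lra. }
  set (a := fun t => alpha (k0 + L + 1 + t)%nat ^ L).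
  assert (Ha0 : forall t, 0 <= a t) by (intro t; apply pow_le; auto).
  assert (Hmon : forall p q, (p <= q)%nat -> alpha q <= alpha p).
  { intros p q Hpq; induction Hpq; [lra|]. specialize (Hm m); lra. }
  assert (Hwin : forall t, d (t + L)%nat <= (1 - a t) * d t).
  { intro t. destruct (HLatt t) as [j0 [Hj0 Hy0]].
    assert (Hw := window n E B eta alpha (k0 + t) (y t) (Lo t) (U t) j0 HU hA Hj0
       (fun j Hj => conj (HLb t j Hj) (HUb t j Hj)) Hy0).
    fold L in Hw.
    assert (Hc : forall i, (i < n)%nat -> y (t + L)%nat i = traj n E eta alpha (k0 + t) (y t) L i).
    { intros i _; unfold y; rewrite traj_comp; auto. }
    assert (HU2 : U (t + L)%nat <= U t - aprod alpha (k0 + t) L * (U t - Lo t)).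
    { apply HUle; intros i Hi; rewrite Hc; auto; apply Hw; auto. }
    assert (HL2 : Lo t <= Lo (t + L)%nat).
    { apply HLge; intros i Hi; rewrite Hc; auto; apply Hw; auto. }
    assert (Hal : a t <= aprod alpha (k0 + t) L).
    { eapply Rle_trans; [|apply aprod_lb; auto]. unfold a. apply pow_incr; split; auto.
      apply Hmon; lia. }
    specialize (Hd0 t). unfold d in *. nra. }
  assert (Hinf : forall M, exists T, M < msum a T).
  { intro M. destruct (Hcv (M + sum_f_R0 (fun k => alpha k ^ L) (k0 + L))) as [N HN].
    exists N. specialize (HN (k0 + L + N)%nat ltac:(lia)). fold L in HN.
    rewrite (sum_split _ (k0 + L) N) in HN. replace (msum _ N) with (msum a N) in HN by reflexivity. lra. }
  pose proof (decay d a L Hd0 Hddec Ha0 Hwin Hinf) as Hdec.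
  assert (HLub : forall t, Lo t <= U 0%nat).
  { intro t. pose proof (decr_multi U HUdec 0 t ltac:(lia)).
    pose proof (HUb t 0%nat ltac:(lia)); pose proof (HLb t 0%nat ltac:(lia)); lra. }
  destruct (growing_cv Lo HLinc) as [z Hz].
  { exists (U 0%nat). intros r [t ->]; auto. }
  exists z. intros i Hi eps Heps.
  destruct (Hz (eps / 2)) as [N1 HN1]; [lra|].
  destruct (Hdec (eps / 2)) as [N2 HN2]; [lra|].
  exists (max N1 N2). intros t Ht.
  specialize (HN1 t ltac:(lia)). specialize (HN2 t ltac:(lia)).
  unfold R_dist in *. fold (y t).
  pose proof (HLb t i Hi); pose proof (HUb t i Hi). unfold d in HN2.
  apply Rabs_def2 in HN1. apply Rabs_def1; lra.
Qed.

Lemma fneg_min d (x : nat -> R) l : fold_right Rmin (- d) (map (fun j => - x j) l) = - fold_right Rmax d (map x l).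
Proof. induction l; simpl; auto. rewrite IHl, Ropp_Rmax; auto. Qed.
Lemma fneg_max d (x : nat -> R) l : fold_right Rmax (- d) (map (fun j => - x j) l) = - fold_right Rmin d (map x l).
Proof. induction l; simpl; auto. rewrite IHl, Ropp_Rmin; auto. Qed.

Lemma traj_neg n E eta alpha k0 x0 m :
  traj n E eta (fun k => 1 - alpha k - eta k) k0 (fun i => - x0 i) m =
  fun i => - traj n E eta alpha k0 x0 m i.
Proof. induction m; simpl; auto. rewrite IHm. apply functional_extensionality; intro i.
  unfold step, nbr_min, nbr_max. rewrite fneg_min, fneg_max. ring. Qed.

Theorem corollary2 (n : nat) (E : graph_seq) (B : nat) (eta alpha : nat -> R) :
  (3 <= n)%nat ->
  UJSC n E B ->
  in_A_ave eta alpha ->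
  ((forall k, alpha k >= alpha (S k)) ->
   cv_infty (fun N => sum_f_R0 (fun k => alpha k ^ ((n - 1) * B)) N) ->
   global_consensus n E eta alpha)
  /\
  ((forall k, alpha k + eta k <= alpha (S k) + eta (S k)) ->
   cv_infty (fun N => sum_f_R0 (fun k => (1 - alpha k - eta k) ^ ((n - 1) * B)) N) ->
   global_consensus n E eta alpha).
Proof.
  intros Hn HU hA. split.
  - intros; apply (part1 n E B); auto; lia.
  - intros Hmono Hcv.
    assert (hB : in_A_ave eta (fun k => 1 - alpha k - eta k)).
    { intro k; specialize (hA k); lra. }
    assert (Hc := part1 n E B eta (fun k => 1 - alpha k - eta k) ltac:(lia) HU hB
      (fun k => ltac:(specialize (Hmono k); lra)) Hcv).
    intros k0 x0. destruct (Hc k0 (fun i => - x0 i)) as [z Hz].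
    exists (- z). intros i Hi eps He.
    destruct (CV_opp _ _ (Hz i Hi) eps He) as [N HN]. exists N. intros m Hm.
    specialize (HN m Hm). unfold opp_seq in HN. rewrite traj_neg, Ropp_involutive in HN. auto.
Qed.
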